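(* Let $\Gamma$ be a complete dominance graph on vertex set $\{1,\dots,n\}$ with graph Laplacian $L$. Let $\tilde{\Gamma}$ be obtained from $\Gamma$ either by deleting an edge of $\Gamma$ (of weight $w$) or by adding an edge $(i,j)$ with weight $w\in[0,1]$, where $(i,j)\notin E$, and let $\tilde{L}$ be the graph Laplacian of $\tilde{\Gamma}$. Then $\mathrm{hd}(L,\tilde{L})=w$.
   Context: For a weighted digraph with weights $w_{ij}\ge 0$ ($w_{ij}=0$ iff $(i,j)$ is not an edge), $d^{+}(i)=\sum_j w_{ij}$, $D=\mathrm{diag}(d^{+}(1),\dots,d^{+}(n))$, $A=[w_{ij}]$, and the graph Laplacian is $L=D-A$. A complete dominance graph is an acyclic tournament (for each pair of distinct vertices exactly one of $(i,j),(j,i)$ is an edge) in which every edge has weight $1$. For $n\times n$ complex matrices $M,\tilde{M}$ with eigenvalues $\lambda_1,\dots,\lambda_n$ and $\tilde\lambda_1,\dots,\tilde\lambda_n$, the spectral variation is $\mathrm{sv}(M,\tilde M)=\max_i\min_j|\tilde\lambda_i-\lambda_j|$ and the Hausdorff distance is $\mathrm{hd}(M,\tilde M)=\max\{\mathrm{sv}(M,\tilde M),\mathrm{sv}(\tilde M,M)\}$. *)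

(* Defs.v *)
From HB Require Import structures.
From mathcomp Require Import all_boot all_order all_algebra.
From mathcomp Require Import complex.
Set Implicit Arguments. Unset Strict Implicit. Unset Printing Implicit Defensive.
Import Order.TTheory GRing.Theory Num.Theory.
Local Open Scope ring_scope.

Section Defs.
Variable R : rcfType.

(* weighted digraph on 'I_n given by its weight matrix A (A k l = w_kl >= 0) *)

Definition laplacian n (A : 'M[R]_n) : 'M[R]_n :=
  diag_mx (\row_k \sum_l A k l) - A.

Definition edge n (A : 'M[R]_n) : rel 'I_n := fun k l => A k l != 0.

Definition acyclic n (A : 'M[R]_n) : Prop :=
  forall (x : 'I_n) (s : seq 'I_n), path (edge A) x s -> last x s = x -> s = [::].

Definition complete_dominance n (A : 'M[R]_n) : Prop :=
  [/\ forall k l, A k l = 0 \/ A k l = 1,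
      forall k, A k k = 0,
      forall k l, k != l -> (A k l == 1) (+) (A l k == 1) &
      acyclic A].

Definition set_entry n (A : 'M[R]_n) (i j : 'I_n) (x : R) : 'M[R]_n :=
  \matrix_(k, l) if (k == i) && (l == j) then x else A k l.

Definition eigs n (M : 'M[R[i]]_n) : seq R[i] :=
  sval (closed_field_poly_normal (char_poly M)).

(* min / max of f over a seq (0 on the empty seq) *)
Definition min_over (T : Type) (f : T -> R) (s : seq T) : R :=
  if s is x :: s' then foldr (fun y acc => Num.min (f y) acc) (f x) s' else 0.
Definition max_over (T : Type) (f : T -> R) (s : seq T) : R :=
  if s is x :: s' then foldr (fun y acc => Num.max (f y) acc) (f x) s' else 0.

Definition spec_var n (M Mt : 'M[R[i]]_n) : R :=
  max_over (fun lt => min_over (fun l => ComplexField.Normc.normc (lt - l)) (eigs M)) (eigs Mt).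

Definition hausdorff n (M Mt : 'M[R[i]]_n) : R :=
  Num.max (spec_var M Mt) (spec_var Mt M).

Definition toCmx n (M : 'M[R]_n) : 'M[R[i]]_n := map_mx (real_complex R) M.

End Defs.

(* Main.v *)
Require Import Defs.
From HB Require Import structures.
From mathcomp Require Import all_boot all_order all_algebra.
From mathcomp Require Import complex.
From mathcomp Require Import fingroup perm.
From mathcomp Require Import ring lra.
Import Order.TTheory GRing.Theory Num.Theory.
Local Open Scope ring_scope.

Section Comb.
Variable R : rcfType.
Variable n : nat.
Variable A : 'M[R]_n.
Hypothesis HA : complete_dominance A.

Definition od (u : 'I_n) : nat := #|[set l | A u l == 1]|.

Lemma A01 u v : A u v = 0 \/ A u v = 1.
Proof. by case: HA => H _ _ _; apply: H. Qed.

Lemma Adiag u : A u u = 0.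
Proof. by case: HA => _ H _ _; apply: H. Qed.

Lemma Atour u v : u != v -> (A u v == 1) (+) (A v u == 1).
Proof. by case: HA => _ _ H _; apply: H. Qed.

Lemma Aacyc : acyclic A.
Proof. by case: HA. Qed.

Lemma Atrans u v x : A u v = 1 -> A v x = 1 -> A u x = 1.
Proof.
move=> Huv Hvx.
have e1 : edge A u v by rewrite /edge Huv oner_neq0.
have e2 : edge A v x by rewrite /edge Hvx oner_neq0.
have [eux|nux] := eqVneq u x.
  subst x.
  by have := @Aacyc u [:: v; u]; rewrite /= e1 e2 => /(_ isT erefl).
have := Atour u x nux.
have [//|Hux] := eqVneq (A u x) 1.
rewrite /= => /eqP Hxu.
have e3 : edge A x u by rewrite /edge Hxu oner_neq0.
by have := @Aacyc u [:: v; x; u]; rewrite /= e1 e2 e3 => /(_ isT erefl).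
Qed.

Lemma od_lt u v : A u v = 1 -> (od v < od u)%N.
Proof.
move=> Huv; apply: proper_card; apply/properP; split.
  by apply/subsetP => x; rewrite !inE => /eqP Hvx; apply/eqP; apply: Atrans Hvx.
exists v; first by rewrite inE Huv.
by rewrite inE Adiag eq_sym oner_eq0.
Qed.

Lemma od_ltn u : (od u < n)%N.
Proof.
rewrite -[X in (_ < X)%N]card_ord -cardsT; apply: proper_card; apply/properP; split.
  by apply/subsetP => x; rewrite inE.
by exists u; rewrite ?inE // Adiag eq_sym oner_eq0.
Qed.

Lemma od_inj : injective od.
Proof.
move=> u v Huv; apply/eqP; apply/negP => /negP nuv.
have := Atour u v nuv.
have [H1|H1] := eqVneq (A u v) 1.
  by have := od_lt _ _ H1; rewrite Huv ltnn.
rewrite /= => /eqP H2.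
by have := od_lt _ _ H2; rewrite Huv ltnn.
Qed.

Lemma A_od u v : A u v = (od v < od u)%:R.
Proof.
have [H|H] := A01 u v; last by rewrite H od_lt.
case: ltnP => //= Hlt; rewrite H.
have nuv : u != v by apply: contraTneq Hlt => ->; rewrite ltnn.
have := Atour u v nuv; rewrite H eq_sym oner_eq0 /= => /eqP H2.
by have := od_lt _ _ H2; rewrite ltnNge (ltnW Hlt).
Qed.

Lemma rowsum_od u : \sum_l A u l = (od u)%:R.
Proof.
rewrite (eq_bigr (fun l => (A u l == 1)%:R)); last first.
  by move=> l _; have [->|->] := A01 u l; rewrite ?eqxx // eq_sym oner_eq0.
rewrite -natr_sum /od -sum1_card big_mkcond /=; congr (_%:R).
rewrite [RHS]big_mkcond; apply: eq_bigr => l _; rewrite inE; by case: (_ == _).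
Qed.

Definition odo (u : 'I_n) : 'I_n := Ordinal (od_ltn u).
Lemma odo_inj : injective odo.
Proof. by move=> u v /(congr1 val) /= /od_inj. Qed.
Definition sigp : {perm 'I_n} := perm odo_inj.
Lemma sigE u : (sigp u : nat) = od u.
Proof. by rewrite /sigp permE. Qed.

End Comb.

Set Implicit Arguments. Unset Strict Implicit.

Lemma det_trig_perm (F : comNzRingType) n (M : 'M[F]_n) (s : {perm 'I_n}) :
  (forall r c, (s r < s c)%N -> M r c = 0) -> \det M = \prod_r M r r.
Proof.
move=> Ht.
set M' := row_perm (s^-1)%g (col_perm (s^-1)%g M).
have -> : \det M = \det M'.
  rewrite /M' row_permE col_permE !det_mulmx !det_perm invgK odd_permV.
  by rewrite mulrCA -signr_addb addbb expr0 mulr1.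
rewrite det_trig; last first.
  apply/is_trig_mxP => r c rc; rewrite /M' !mxE; apply: Ht.
  by rewrite !permKV.
rewrite [RHS](reindex_inj (h := (s^-1)%g) perm_inj).
by apply: eq_bigr => r _; rewrite /M' !mxE.
Qed.

Lemma det_trig_perm' (F : comNzRingType) n (M : 'M[F]_n) (s : {perm 'I_n}) :
  (forall r c, (s c < s r)%N -> M r c = 0) -> \det M = \prod_r M r r.
Proof.
move=> Ht; rewrite -det_tr (@det_trig_perm _ _ _ s).
  by apply: eq_bigr => r _; rewrite mxE.
by move=> r c H; rewrite mxE; apply: Ht.
Qed.

Section Cx.
Variable R : rcfType.

Lemma eigsP n (M : 'M[R[i]]_n) x : (x \in eigs M) = (\det (x%:M - M) == 0).
Proof.
rewrite /eigs; case: closed_field_poly_normal => r /= Hr.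
have <- : root (char_poly M) x = (x \in r).
  by rewrite Hr (monicP (char_poly_monic M)) scale1r root_prod_XsubC.
rewrite rootE /char_poly.
change ((\det (char_poly_mx M)).[x]) with (horner_eval x (\det (char_poly_mx M))).
rewrite -det_map_mx.
do 2 f_equal; apply/matrixP => a b; rewrite !mxE.
by rewrite rmorphB rmorphMn /= horner_evalE hornerX horner_evalE hornerC.
Qed.


Lemma max_over_all (T : eqType) (f : T -> R) (x0 : T) (s' : seq T) :
  (forall y, y \in x0 :: s' -> f y <= max_over f (x0 :: s')) /\
  exists2 y, y \in x0 :: s' & max_over f (x0 :: s') = f y.
Proof.
rewrite /max_over; elim: s' => [|z s' [IH1 [y0 Hy IH2]]] /=.
  by split => [y|]; [rewrite inE => /eqP -> | exists x0; rewrite ?inE].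
split.
  move=> y; rewrite !inE => /orP [/eqP ->|/orP [/eqP ->|Hy']].
  - by rewrite le_max (IH1 x0) ?inE ?eqxx ?orbT.
  - by rewrite le_max lexx.
  - by rewrite le_max (IH1 y) ?inE ?Hy' ?orbT.
rewrite maxEle; case: ifP => _.
  by exists y0 => //; move: Hy; rewrite !inE => /orP [->|->]; rewrite ?orbT.
by exists z; rewrite // !inE eqxx orbT.
Qed.

Lemma min_over_all (T : eqType) (f : T -> R) (x0 : T) (s' : seq T) :
  (forall y, y \in x0 :: s' -> min_over f (x0 :: s') <= f y) /\
  exists2 y, y \in x0 :: s' & min_over f (x0 :: s') = f y.
Proof.
rewrite /min_over; elim: s' => [|z s' [IH1 [y0 Hy IH2]]] /=.
  by split => [y|]; [rewrite inE => /eqP -> | exists x0; rewrite ?inE].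
split.
  move=> y; rewrite !inE => /orP [/eqP ->|/orP [/eqP ->|Hy']].
  - by rewrite ge_min (IH1 x0) ?inE ?eqxx ?orbT.
  - by rewrite ge_min lexx.
  - by rewrite ge_min (IH1 y) ?inE ?Hy' ?orbT.
rewrite minEle; case: ifP => _.
  by exists z; rewrite // !inE eqxx orbT.
by exists y0 => //; move: Hy; rewrite !inE => /orP [->|->]; rewrite ?orbT.
Qed.

Lemma max_over_ub (T : eqType) (f : T -> R) s x : x \in s -> f x <= max_over f s.
Proof. by case: s => // x0 s' Hx; case: (max_over_all f x0 s') => H _; apply: H. Qed.

Lemma max_over_le (T : eqType) (f : T -> R) s v :
  0 <= v -> (forall x, x \in s -> f x <= v) -> max_over f s <= v.
Proof.
case: s => // x0 s' _ H; case: (max_over_all f x0 s') => _ [y Hy ->].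
exact: H.
Qed.

Lemma min_over_lb (T : eqType) (f : T -> R) s x : x \in s -> min_over f s <= f x.
Proof. by case: s => // x0 s' Hx; case: (min_over_all f x0 s') => H _; apply: H. Qed.

Lemma min_over_ge (T : eqType) (f : T -> R) s v x :
  x \in s -> (forall y, y \in s -> v <= f y) -> v <= min_over f s.
Proof.
case: s => // x0 s' _ H; case: (min_over_all f x0 s') => _ [y Hy ->].
exact: H.
Qed.

Lemma normcR (a b : R) :
  ComplexField.Normc.normc (real_complex R a - real_complex R b) = `|a - b|.
Proof.
by rewrite -rmorphB /ComplexField.Normc.normc /= expr0n /= addr0 sqrtr_sqr.
Qed.

Lemma nat_dist (a b : nat) : a != b -> 1 <= `|a%:R - b%:R : R|.
Proof.
case: (ltngtP a b) => // H _.
  by rewrite distrC -natrB ?(ltnW H) // normr_nat ler1n subn_gt0.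
by rewrite -natrB ?(ltnW H) // normr_nat ler1n subn_gt0.
Qed.

Lemma hd_main n (M Mt : 'M[R[i]]_n) (s : 'I_n -> nat) (sinj : injective s)
    (k : 'I_n) (d w : R) :
  (forall x, (x \in eigs M) <-> exists r, x = real_complex R (s r)%:R) ->
  (forall x, (x \in eigs Mt) <->
      exists r, x = real_complex R ((s r)%:R + d *+ (r == k))) ->
  `|d| = w -> w <= 1 -> hausdorff M Mt = w.
Proof.
move=> HM HMt Hd Hw1.
have w0 : 0 <= w by rewrite -Hd.
have key : forall r, `|d *+ (r == k)| <= w.
  by move=> r; case: (r == k); rewrite ?mulr1n ?Hd ?mulr0n ?normr0.
have sv1 : spec_var M Mt <= w.
  apply: max_over_le => // x /HMt [r ->].
  apply: le_trans (min_over_lb _ (_ : real_complex R (s r)%:R \in eigs M)) _.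
    by apply/HM; exists r.
  by rewrite normcR addrC addKr.
have sv2a : spec_var Mt M <= w.
  apply: max_over_le => // x /HM [r ->].
  apply: le_trans (min_over_lb _ (_ : real_complex R ((s r)%:R + d *+ (r == k)) \in eigs Mt)) _.
    by apply/HMt; exists r.
  by rewrite normcR opprD addrA subrr sub0r normrN.
have sv2b : w <= spec_var Mt M.
  have Hk : real_complex R (s k)%:R \in eigs M by apply/HM; exists k.
  apply: le_trans (max_over_ub _ Hk).
  have Hk' : real_complex R ((s k)%:R + d *+ (k == k)) \in eigs Mt.
    by apply/HMt; exists k.
  apply: (min_over_ge Hk') => y /HMt [r ->].
  rewrite normcR.
  case: (eqVneq r k) => [->|nrk].
    by rewrite mulr1n opprD addrA subrr sub0r normrN Hd.
  rewrite mulr0n addr0; apply: le_trans Hw1 _; apply: nat_dist.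
  by rewrite (inj_eq sinj) eq_sym.
rewrite /hausdorff max_r; first by apply/eqP; rewrite eq_le sv2a sv2b.
by apply: le_trans sv1 sv2b.
Qed.


Lemma eigs_trig n (M : 'M[R]_n) (s : {perm 'I_n}) x :
  ((forall r c, (s r < s c)%N -> M r c = 0) \/
   (forall r c, (s c < s r)%N -> M r c = 0)) ->
  (x \in eigs (toCmx M)) <-> exists r, x = real_complex R (M r r).
Proof.
move=> Htr; rewrite eigsP.
have -> : \det (x%:M - toCmx M) = \prod_r (x - real_complex R (M r r)).
  case: Htr => Ht.
    rewrite (@det_trig_perm _ _ _ s); first by apply: eq_bigr => r _; rewrite !mxE eqxx mulr1n.
    move=> r c H; have nrc : r != c by apply: contraTneq H => ->; rewrite ltnn.
    by rewrite !mxE Ht // (negbTE nrc) mulr0n rmorph0 subr0.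
  rewrite (@det_trig_perm' _ _ _ s); first by apply: eq_bigr => r _; rewrite !mxE eqxx mulr1n.
  move=> r c H; have nrc : r != c by apply: contraTneq H => ->; rewrite ltnn.
  by rewrite !mxE Ht // (negbTE nrc) mulr0n rmorph0 subr0.
split.
  by move/prodf_eq0 => [r _]; rewrite subr_eq0 => /eqP ->; exists r.
by move=> [r ->]; apply/prodf_eq0; exists r => //; rewrite subrr.
Qed.

Lemma det_sim n (M N D : 'M[R]_n) x :
  D *m M = N *m D -> \det D = 1 ->
  \det (x%:M - toCmx M) = \det (x%:M - toCmx N).
Proof.
move=> H HD.
have E : toCmx D *m (x%:M - toCmx M) = (x%:M - toCmx N) *m toCmx D.
  rewrite mulmxBr mulmxBl mul_mx_scalar mul_scalar_mx /toCmx -!map_mxM H.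
  by [].
have HD' : \det (toCmx D) = 1 by rewrite /toCmx det_map_mx HD rmorph1.
by move/(congr1 determinant): E; rewrite !det_mulmx HD' mul1r mulr1.
Qed.

End Cx.

Section Mx.
Variable R : rcfType.
Variable n : nat.
Variable s : {perm 'I_n}.
Local Notation S u := (nat_of_ord (s u)).

Lemma S_eq u v : (S u == S v) = (u == v).
Proof. by rewrite val_eqE (inj_eq perm_inj). Qed.

Lemma sum_delta (F : 'I_n -> R) r : \sum_k (r == k)%:R * F k = F r.
Proof.
rewrite (bigD1 r) //= eqxx mul1r big1 ?addr0 // => k nk.
by rewrite eq_sym (negbTE nk) mul0r.
Qed.

Lemma sum_delta' (F : 'I_n -> R) r : \sum_k (k == r)%:R * F k = F r.
Proof. by under eq_bigr do rewrite eq_sym; apply: sum_delta. Qed.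

Lemma sum_sel1 (F : 'I_n -> R) k0 m : S k0 = m -> \sum_k (S k == m)%:R * F k = F k0.
Proof.
move=> Hk0; rewrite (bigD1 k0) //= Hk0 eqxx mul1r big1 ?addr0 // => k nk.
by rewrite -Hk0 S_eq (negbTE nk) mul0r.
Qed.

Lemma sum_sel0 (F : 'I_n -> R) m : (n <= m)%N -> \sum_k (S k == m)%:R * F k = 0.
Proof.
move=> Hm; apply: big1 => k _; have := ltn_ord (s k).
by case: eqP => [->|]; rewrite ?mul0r // ltnNge Hm.
Qed.

Definition Dm : 'M[R]_n := \matrix_(r, c) ((r == c)%:R - (S r == (S c).+1)%:R).
Definition Lam : 'M[R]_n := diag_mx (\row_r (S r)%:R).
Definition Lg : 'M[R]_n := \matrix_(k, c) ((S k)%:R *+ (k == c) - (S c < S k)%:R).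

Lemma DL : Dm *m Lg = Lam *m Dm.
Proof.
apply/matrixP => r c; rewrite mul_diag_mx !mxE.
under eq_bigr do rewrite !mxE mulrBl.
rewrite sumrB sum_delta.
case Hr: (S r) => [|m].
  rewrite big1 ?subr0 ?mul0r ?mul0rn ?ltn0 ?subrr // => k _.
  by rewrite mul0r.
have Hm : (m < n)%N by have := ltn_ord (s r); rewrite Hr => /ltnW.
pose k0 := (s^-1)%g (Ordinal Hm).
have Hk0 : S k0 = m by rewrite /k0 permKV.
under eq_bigr do rewrite eqSS eq_sym.
rewrite (sum_sel1 _ Hk0) Hk0.
have Hkc : (k0 == c) = (S c == m) by rewrite -Hk0 S_eq eq_sym.
rewrite Hkc eqSS.
case: (eqVneq r c) => [<-|nrc].
  rewrite Hr ltnn (gtn_eqF (ltnSn m)) (ltn_eqF (ltnSn m)) [(m.+1 < m)%N]ltnNge leqnSn /=.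
  by rewrite mulr1n mulr0n !subr0 mulr1.
rewrite /=.
case: (ltngtP (s c) m) => H.
- rewrite ltnS (ltnW H) /=. rewrite -natr1. lra.
- rewrite ltnS leqNgt H /=. rewrite -natr1. lra.
- rewrite H ltnSn /=. rewrite -natr1. lra.
Qed.

Definition hv (t : nat) : 'rV[R]_n := \row_k (S k <= t)%:R.

Lemma hD t : (t < n)%N -> hv t *m Dm = \row_c (S c == t)%:R.
Proof.
move=> Ht; apply/matrixP => z c; rewrite !mxE.
under eq_bigr do rewrite !mxE mulrBr.
rewrite sumrB.
under eq_bigr do rewrite mulrC.
rewrite sum_delta'.
under eq_bigr do rewrite mulrC.
case: (ltnP (S c).+1 n) => Hc.
  pose k0 := (s^-1)%g (Ordinal Hc).
  have Hk0 : S k0 = (S c).+1 by rewrite /k0 permKV.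
  rewrite (sum_sel1 _ Hk0) Hk0.
  case: (ltngtP (S c) t) => H.
  - by rewrite subrr.
  - by rewrite subrr.
  - by rewrite subr0.
rewrite (sum_sel0 _ Hc) subr0.
have H1 : (t <= S c)%N by rewrite -ltnS (leq_trans Ht Hc).
by rewrite eqn_leq H1 andbT.
Qed.


Lemma DLt c0 i j :
  Dm *m (Lg + c0 *: ((delta_mx i 0 : 'cV[R]_n) *m (delta_mx 0 i - delta_mx 0 j : 'rV[R]_n))) =
  (Lam + c0 *: (Dm *m (delta_mx i 0 : 'cV[R]_n) *m (hv (S i) - hv (S j)))) *m Dm.
Proof.
have Hu : delta_mx 0 i - delta_mx 0 j = (hv (S i) - hv (S j)) *m Dm :> 'rV[R]_n.
  rewrite mulmxBl !hD ?ltn_ord //.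
  by congr (_ - _); apply/matrixP => z c; rewrite !mxE S_eq ord1 eqxx.
rewrite [in LHS]mulmxDr DL mulmxDl Hu; congr (_ + _).
by rewrite -scalemxAr -scalemxAl !mulmxA.
Qed.

Lemma detD1 : \det Dm = 1.
Proof.
rewrite (@det_trig_perm _ _ _ s).
  apply: big1 => r _; rewrite !mxE eqxx.
  by rewrite (ltn_eqF (ltnSn _)) subr0.
move=> r c H; rewrite !mxE.
have nrc : r != c by apply: contraTneq H => ->; rewrite ltnn.
by rewrite (negbTE nrc) ltn_eqF ?subrr // (leq_trans H).
Qed.

Lemma Tentry c0 i (g : 'rV[R]_n) r c :
  (Lam + c0 *: (Dm *m (delta_mx i 0 : 'cV[R]_n) *m g)) r c =
  (S r)%:R *+ (r == c) + c0 * (Dm r i * g 0 c).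
Proof.
rewrite !mxE -colE big_ord1 /col mxE.
congr (_ + _ * (_ * _)). exact: mxE.
Qed.

End Mx.

Lemma lap_pert (R : rcfType) n (A : 'M[R]_n) i j x : i != j ->
  laplacian (set_entry A i j x) =
  laplacian A + (x - A i j) *: ((delta_mx i 0 : 'cV[R]_n) *m (delta_mx 0 i - delta_mx 0 j : 'rV[R]_n)).
Proof.
move=> nij.
have Hs : forall k, \sum_m (set_entry A i j x) k m = \sum_m A k m + (x - A i j) * (k == i)%:R.
  move=> k; case: (eqVneq k i) => [->|nki].
    rewrite (bigD1 j) //= [in RHS](bigD1 j) //= !mxE !eqxx /=.
    rewrite (eq_bigr (fun m => A i m)); last by move=> m /negbTE nmj; rewrite mxE eqxx nmj.
    by rewrite mulr1; lra.
  rewrite mulr0 addr0; apply: eq_bigr => m _; rewrite mxE.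
  by rewrite (negbTE nki).
apply/matrixP => k l.
rewrite mulmxBr !mul_delta_mx /laplacian !mxE Hs.
case: (eqVneq k i) => [->|nki]; last first.
  by rewrite /= mulr0 addr0 subrr mulr0 addr0.
rewrite ?eqxx /=.
case: (eqVneq l j) => [->|nlj].
  rewrite [j == i]eq_sym (negbTE nij) /= !mulr0n ?mulr1; lra.
rewrite ?(negbTE nlj) /= ?subr0 ?mulr1 [l == i]eq_sym.
case: (eqVneq i l) => [<-|nil].
  by rewrite ?eqxx /= !mulr1n; lra.
by rewrite ?(negbTE nil) /= !mulr0n; lra.
Qed.


Section T.
Variable R : rcfType.
Variable n : nat.
Variable s : {perm 'I_n}.
Variables i j : 'I_n.
Local Notation S u := (nat_of_ord (s u)).

Definition Tm (c0 : R) := @Lam R n s + c0 *: (@Dm R n s *m (delta_mx i 0 : 'cV[R]_n) *m (@hv R n s (S i) - @hv R n s (S j))).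

Lemma Tm_entry c0 r c : Tm c0 r c =
  (S r)%:R *+ (r == c) + c0 * (((r == i)%:R - (S r == (S i).+1)%:R) *
     ((S c <= S i)%:R - (S c <= S j)%:R)).
Proof. by rewrite /Tm Tentry !mxE. Qed.

Lemma T_add (w : R) (k : 'I_n) : (S i < S j)%N -> S k = (S i).+1 ->
  (forall r c, (S c < S r)%N -> Tm w r c = 0) /\
  (forall r, Tm w r r = (S r)%:R + w *+ (r == k)).
Proof.
move=> Hij Hk; split => [r c H|r]; rewrite Tm_entry.
  have nrc : r != c by apply: contraTneq H => ->; rewrite ltnn.
  rewrite (negbTE nrc) mulr0n add0r.
  case: (eqVneq r i) => [Eri|nri].
    subst r; rewrite (ltnW H) (leq_trans (ltnW H) (ltnW Hij)) subrr.
    by rewrite !mulr0.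
  case: (eqVneq (S r) (S i).+1) => Hr.
    have Hc : (S c <= S i)%N by rewrite -ltnS -Hr.
    by rewrite Hc (leq_trans Hc (ltnW Hij)) subrr !mulr0.
  by rewrite /= subrr mul0r mulr0.
rewrite eqxx mulr1n; congr (_ + _).
case: (eqVneq r i) => [Eri|nri].
  subst r; have nik : (i == k) = false.
    by apply/eqP => Eik; move: Hk; rewrite -Eik => /eqP; rewrite ltn_eqF.
  rewrite nik leqnn (ltnW Hij) subrr mulr0n; lra.
case: (eqVneq r k) => [Erk|nrk].
  subst r; rewrite Hk eqxx ltnn Hij /= mulr1n; lra.
have Hr : (S r == (S i).+1) = false by rewrite -Hk S_eq (negbTE nrk).
by rewrite Hr /= subrr mul0r mulr0 mulr0n.
Qed.

Lemma T_del : (S j < S i)%N ->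
  (forall r c, (S r < S c)%N -> Tm (-1) r c = 0) /\
  (forall r, Tm (-1) r r = (S r)%:R + (-1) *+ (r == i)).
Proof.
move=> Hji; split => [r c H|r]; rewrite Tm_entry.
  have nrc : r != c by apply: contraTneq H => ->; rewrite ltnn.
  rewrite (negbTE nrc) mulr0n add0r.
  case: (eqVneq r i) => [Eri|nri].
    subst r; rewrite leqNgt H /= leqNgt (ltn_trans Hji H) /= subrr.
    by rewrite !mulr0.
  case: (eqVneq (S r) (S i).+1) => Hr.
    have Hc : (S i < S c)%N by rewrite (ltn_trans _ H) // Hr.
    by rewrite leqNgt Hc /= leqNgt (ltn_trans Hji Hc) /= subrr !mulr0.
  by rewrite /= subrr mul0r mulr0.
rewrite eqxx mulr1n; congr (_ + _).
case: (eqVneq r i) => [Eri|nri].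
  subst r; rewrite leqnn leqNgt Hji /= (ltn_eqF (ltnSn _)) /= mulr1n; lra.
case: (eqVneq (S r) (S i).+1) => Hr.
  by rewrite Hr ltnn leqNgt (ltn_trans Hji (ltnSn _)) /= !mulr0n subrr mulr0 mulr0.
by rewrite /= subrr mul0r mulr0 mulr0n.
Qed.

End T.

Lemma main_s (R : rcfType) (n : nat) (A At : 'M[R]_n)
    (i j : 'I_n) (w : R) (s : {perm 'I_n}) :
  complete_dominance A ->
  (forall u v, A u v = ((s v : nat) < s u)%:R) ->
  (forall u, \sum_l A u l = (s u : nat)%:R) ->
  (
    (A i j != 0 /\ w = A i j /\ At = set_entry A i j 0)
    \/
    (i != j /\ A i j = 0 /\ 0 <= w <= 1 /\ At = set_entry A i j w) ) ->
  hausdorff (toCmx (laplacian A)) (toCmx (laplacian At)) = w.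
Proof.
move=> HA HAs Hrow Hcase.
have HL : laplacian A = @Lg R n s.
  by apply/matrixP => k c; rewrite /laplacian /Lg !mxE Hrow HAs.
have sinj : injective (fun r => nat_of_ord (s r)).
  by move=> u v /val_inj /perm_inj.
have HM : forall x, (x \in eigs (toCmx (laplacian A))) <->
    exists r, x = real_complex R (s r : nat)%:R.
  move=> x; rewrite HL; split.
    move/(@eigs_trig R n _ s) => [| r ->].
      left => r c H; rewrite mxE.
      have nrc : r != c by apply: contraTneq H => ->; rewrite ltnn.
      by rewrite (negbTE nrc) mulr0n ltnNge (ltnW H) subrr.
    by exists r; rewrite mxE eqxx ltnn mulr1n subr0.
  move=> [r ->]; apply/(@eigs_trig R n _ s).
    left => r' c H; rewrite mxE.
    have nrc : r' != c by apply: contraTneq H => ->; rewrite ltnn.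
    by rewrite (negbTE nrc) mulr0n ltnNge (ltnW H) subrr.
  by exists r; rewrite mxE eqxx ltnn mulr1n subr0.
have nij : i != j.
  case: Hcase => [[H _]|[H _]] //.
  by apply: contraNneq H => ->; rewrite Adiag.
have Hpert : forall xv, laplacian (set_entry A i j xv) =
    @Lg R n s + (xv - A i j) *: ((delta_mx i 0 : 'cV[R]_n) *m (delta_mx 0 i - delta_mx 0 j : 'rV[R]_n)).
  by move=> xv; rewrite lap_pert // HL.
have HMt : forall xv (x : R[i]), (x \in eigs (toCmx (laplacian (set_entry A i j xv)))) =
    (x \in eigs (toCmx (Tm s i j (xv - A i j)))).
  move=> xv x.
  have HD : @Dm R n s *m laplacian (set_entry A i j xv) = Tm s i j (xv - A i j) *m @Dm R n s.
    rewrite Hpert; exact: (@DLt R n s (xv - A i j) i j).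
  rewrite [LHS]eigsP [RHS]eigsP.
  by rewrite (det_sim x HD (@detD1 R n s)).
case: Hcase => [[H1 [Hw HAt]]|[_ [H0 [Hw HAt]]]].
  have Aij1 : A i j = 1 by case: (@A01 R n A HA i j) => // H; rewrite H eqxx in H1.
  have Hji : ((s j : nat) < s i)%N by move: Aij1; rewrite HAs; case: ltnP => //= _ /eqP; rewrite eq_sym oner_eq0.
  have [Tl Td] := @T_del R n s i j Hji.
  rewrite Hw Aij1; apply: (@hd_main R n _ _ _ sinj i (-1)).
  - exact: HM.
  - move=> x; rewrite HAt HMt Aij1 sub0r; split.
      move/(@eigs_trig R n _ s) => [| r ->]; first by left.
      by exists r; rewrite Td.
    move=> [r ->]; apply/(@eigs_trig R n _ s); first by left.
    by exists r; rewrite Td.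
  - by rewrite normrN normr1.
  - exact: lexx.
move/andP: Hw => [Hw0 Hw1].
have Aji1 : A j i = 1.
  by have := @Atour R n A HA i j nij; rewrite H0 eq_sym oner_eq0 /= => /eqP.
have Hij : ((s i : nat) < s j)%N by move: Aji1; rewrite HAs; case: ltnP => //= _ /eqP; rewrite eq_sym oner_eq0.
have Hkn : ((s i).+1 < n)%N by apply: leq_ltn_trans Hij (ltn_ord (s j)).
pose k := (s^-1)%g (Ordinal Hkn).
have Hk : (s k : nat) = (s i).+1 by rewrite /k permKV.
have [Tu Td] := @T_add R n s i j w k Hij Hk.
apply: (@hd_main R n _ _ _ sinj k w).
- exact: HM.
- move=> x; rewrite HAt HMt H0 subr0; split.
    move/(@eigs_trig R n _ s) => [| r ->]; first by right.
    by exists r; rewrite Td.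
  move=> [r ->]; apply/(@eigs_trig R n _ s); first by right.
  by exists r; rewrite Td.
- by rewrite ger0_norm.
- exact: Hw1.
Qed.


Unset Implicit Arguments. Set Strict Implicit.

Theorem theorem3p7 (R : rcfType) (n : nat) (A At : 'M[R]_n)
    (i j : 'I_n) (w : R) :
  complete_dominance A ->
  ( (* delete the edge (i,j) of Gamma, of weight w *)
    (A i j != 0 /\ w = A i j /\ At = set_entry A i j 0)
    \/
    (* add a (non-loop) edge (i,j) not in E, of weight w in [0,1] *)
    (i != j /\ A i j = 0 /\ 0 <= w <= 1 /\ At = set_entry A i j w) ) ->
  hausdorff (toCmx (laplacian A)) (toCmx (laplacian At)) = w.
Proof.
move=> HA; apply: (@main_s R n A At i j w (@sigp R n A HA) HA).
  by move=> u v; rewrite !sigE; apply: A_od.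
by move=> u; rewrite sigE; apply: rowsum_od.
Qed.
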